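(* Let $X$ be a real Hilbert space, let $A$ be a nonempty closed convex subset of $X$ and $B$ a closed affine subspace of $X$ (with $A\cap B$ possibly empty). Let $g:=P_{\overline{B-A}}\,0$ and assume $g\in B-A$, so that $E:=A\cap(B-g)$ and $F:=(A+g)\cap B$ are nonempty. Let $T:=\mathrm{Id}-P_A+P_BR_A$ and let $x\in X$. Then: (i) $(P_AT^nx)_{n\in\mathbb{N}}$ converges weakly to some point in $E$; (ii) $(P_BT^nx)_{n\in\mathbb{N}}$ converges weakly to some point in $F$.
   Context: For a nonempty closed convex set $C\subseteq X$, $P_C$ denotes the metric projection onto $C$ and $R_C:=2P_C-\mathrm{Id}$. $T$ is the Douglas–Rachford operator for the ordered pair $(A,B)$. $g$ is the element of minimal norm in the closure of $B-A=\{b-a:a\in A,b\in B\}$. *)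

(* Defs.v *)
From Stdlib Require Import Reals Lra ClassicalEpsilon.
Open Scope R_scope.

Record Hilbert := mkHilbert {
  carrier :> Type;
  hzero : carrier;
  hadd : carrier -> carrier -> carrier;
  hopp : carrier -> carrier;
  hscal : R -> carrier -> carrier;
  hinner : carrier -> carrier -> R;
  hadd_assoc : forall x y z, hadd x (hadd y z) = hadd (hadd x y) z;
  hadd_comm : forall x y, hadd x y = hadd y x;
  hadd_0 : forall x, hadd x hzero = x;
  hadd_opp : forall x, hadd x (hopp x) = hzero;
  hscal_assoc : forall a b x, hscal a (hscal b x) = hscal (a * b) x;
  hscal_1 : forall x, hscal 1 x = x;
  hscal_distr_v : forall a x y, hscal a (hadd x y) = hadd (hscal a x) (hscal a y);
  hscal_distr_s : forall a b x, hscal (a + b) x = hadd (hscal a x) (hscal b x);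
  hinner_sym : forall x y, hinner x y = hinner y x;
  hinner_add_l : forall x y z, hinner (hadd x y) z = hinner x z + hinner y z;
  hinner_scal_l : forall a x y, hinner (hscal a x) y = a * hinner x y;
  hinner_pos : forall x, 0 <= hinner x x;
  hinner_def : forall x, hinner x x = 0 -> x = hzero;
  hcomplete : forall u : nat -> carrier,
    (forall eps, 0 < eps -> exists N, forall m n, (N <= m)%nat -> (N <= n)%nat ->
       sqrt (hinner (hadd (u m) (hopp (u n))) (hadd (u m) (hopp (u n)))) < eps) ->
    exists l, forall eps, 0 < eps -> exists N, forall n, (N <= n)%nat ->
       sqrt (hinner (hadd (u n) (hopp l)) (hadd (u n) (hopp l))) < eps
}.

Section Ops.
Variable X : Hilbert.

Definition hsub (x y : X) : X := hadd X x (hopp X y).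
Definition hnorm (x : X) : R := sqrt (hinner X x x).

Definition closure (S : X -> Prop) : X -> Prop :=
  fun y => forall eps, 0 < eps -> exists s, S s /\ hnorm (hsub y s) < eps.

Definition is_closed (S : X -> Prop) : Prop := forall y, closure S y -> S y.

Definition is_convex (S : X -> Prop) : Prop :=
  forall x y t, S x -> S y -> 0 <= t <= 1 ->
    S (hadd X (hscal X t x) (hscal X (1 - t) y)).

Definition is_affine (S : X -> Prop) : Prop :=
  (exists x, S x) /\
  forall x y t, S x -> S y -> S (hadd X (hscal X t x) (hscal X (1 - t) y)).

(* B - A = {b - a : a in A, b in B} *)
Definition set_diff (B A : X -> Prop) : X -> Prop :=
  fun z => exists a b, A a /\ B b /\ z = hsub b a.

Definition is_proj (C : X -> Prop) (x p : X) : Prop :=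
  C p /\ forall c, C c -> hnorm (hsub x p) <= hnorm (hsub x c).

(* metric projection P_C (well defined, i.e. unique existence, when C is
   nonempty closed convex in a Hilbert space) *)
Definition proj (C : X -> Prop) (x : X) : X :=
  epsilon (inhabits x) (fun p => is_proj C x p).

Definition refl (C : X -> Prop) (x : X) : X :=
  hsub (hscal X 2 (proj C x)) x.

Definition DR (A B : X -> Prop) (x : X) : X :=
  hadd X (hsub x (proj A x)) (proj B (refl A x)).

Definition weak_cv (u : nat -> X) (l : X) : Prop :=
  forall y, Un_cv (fun n => hinner X (u n) y) (hinner X l y).

End Ops.
Arguments hsub {X}. Arguments hnorm {X}.

(* Main.v *)
Require Import Defs.
From Stdlib Require Import Reals Lra Psatz ClassicalEpsilon Classical.
Open Scope R_scope.


Section H.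
Variable X : Hilbert.

Lemma ip_0_l (y : X) : hinner X (hzero X) y = 0.
Proof.
  pose proof (hinner_add_l X (hzero X) (hzero X) y) as H.
  rewrite hadd_0 in H. lra.
Qed.

Lemma ip_opp_l (u y : X) : hinner X (hopp X u) y = - hinner X u y.
Proof.
  pose proof (hinner_add_l X u (hopp X u) y) as H.
  rewrite hadd_opp, ip_0_l in H. lra.
Qed.

Lemma ip_sub_l (u v y : X) : hinner X (hsub u v) y = hinner X u y - hinner X v y.
Proof. unfold hsub. rewrite hinner_add_l, ip_opp_l. ring. Qed.

Lemma ip_add_r (u v y : X) : hinner X y (hadd X u v) = hinner X y u + hinner X y v.
Proof. rewrite !(hinner_sym X y). apply hinner_add_l. Qed.
Lemma ip_scal_r a (u y : X) : hinner X y (hscal X a u) = a * hinner X y u.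
Proof. rewrite !(hinner_sym X y). apply hinner_scal_l. Qed.
Lemma ip_opp_r (u y : X) : hinner X y (hopp X u) = - hinner X y u.
Proof. rewrite !(hinner_sym X y). apply ip_opp_l. Qed.
Lemma ip_sub_r (u v y : X) : hinner X y (hsub u v) = hinner X y u - hinner X y v.
Proof. rewrite !(hinner_sym X y). apply ip_sub_l. Qed.
Lemma ip_0_r (y : X) : hinner X y (hzero X) = 0.
Proof. rewrite hinner_sym. apply ip_0_l. Qed.

Lemma ext_ip (u v : X) : (forall y, hinner X u y = hinner X v y) -> u = v.
Proof.
  intro H.
  assert (Hd : hsub u v = hzero X).
  { apply hinner_def. rewrite ip_sub_l, H. ring. }
  transitivity (hadd X (hsub u v) v).
  - unfold hsub. rewrite <- hadd_assoc, (hadd_comm X (hopp X v)), hadd_opp, hadd_0. reflexivity.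
  - rewrite Hd, hadd_comm, hadd_0. reflexivity.
Qed.

End H.

Hint Rewrite ip_0_l ip_opp_l ip_sub_l ip_add_r ip_scal_r ip_opp_r ip_sub_r ip_0_r
  hinner_add_l hinner_scal_l : hin.

Ltac veq := apply ext_ip; intro; autorewrite with hin; ring.

Ltac sym_norm :=
  repeat match goal with
  | |- context [hinner ?X ?a ?b] =>
      match goal with
      | |- context [hinner X b a] =>
          tryif unify a b then fail else rewrite (hinner_sym X b a)
      end
  end.

Ltac ipexp := autorewrite with hin; sym_norm.



Section H.
Variable X : Hilbert.
Notation ip := (hinner X).
Implicit Types u v w x y p q c l : X.
Definition nsq (u : X) := ip u u.

Lemma nsq_nonneg u : 0 <= nsq u.
Proof. apply hinner_pos. Qed.

Lemma hnorm_sq u : hnorm u * hnorm u = nsq u.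
Proof. unfold hnorm. apply sqrt_sqrt, nsq_nonneg. Qed.
Lemma hnorm_nonneg u : 0 <= hnorm u.
Proof. apply sqrt_pos. Qed.

Lemma hnorm_lt_iff u eps : 0 < eps -> (hnorm u < eps <-> nsq u < eps * eps).
Proof.
  intro He. pose proof (hnorm_sq u). pose proof (hnorm_nonneg u). split; intro; nra.
Qed.

Lemma hnorm_le_iff u v : hnorm u <= hnorm v <-> nsq u <= nsq v.
Proof.
  pose proof (hnorm_sq u). pose proof (hnorm_nonneg u).
  pose proof (hnorm_sq v). pose proof (hnorm_nonneg v). split; intro; nra.
Qed.

Lemma cauchy_schwarz u v : ip u v * ip u v <= nsq u * nsq v.
Proof.
  unfold nsq.
  destruct (Req_dec (ip v v) 0) as [H0|H0].
  - apply hinner_def in H0. subst. rewrite ip_0_r, ip_0_l. lra.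
  - pose proof (hinner_pos X v) as Hv.
    pose proof (hinner_pos X (hsub u (hscal X (ip u v / ip v v) v))) as H1.
    ipexp. revert H1. ipexp. intro H.
    set (a := ip u u) in *. set (b := ip u v) in *. set (c := ip v v) in *.
    assert (Hc : 0 < c) by lra.
    assert (E : a - b / c * b - b / c * (b - b / c * c) = (a * c - b * b) / c)
      by (field; lra).
    rewrite E in H.
    assert (E2 : a * c - b * b = ((a * c - b * b) / c) * c) by (field; lra).
    nra.
Qed.

Lemma ip_le_norm u v : Rabs (ip u v) <= hnorm u * hnorm v.
Proof.
  pose proof (cauchy_schwarz u v). rewrite <- (hnorm_sq u), <- (hnorm_sq v) in H.
  pose proof (hnorm_nonneg u). pose proof (hnorm_nonneg v).
  assert (0 <= hnorm u * hnorm v) by nra.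
  destruct (Rcase_abs (ip u v)); [rewrite Rabs_left | rewrite Rabs_right]; nra.
Qed.

Lemma ip_le_norm' u v : ip u v <= hnorm u * hnorm v.
Proof. pose proof (ip_le_norm u v). pose proof (Rle_abs (ip u v)). lra. Qed.

Lemma hnorm_triangle u v : hnorm (hadd X u v) <= hnorm u + hnorm v.
Proof.
  pose proof (hnorm_nonneg u). pose proof (hnorm_nonneg v).
  pose proof (hnorm_nonneg (hadd X u v)).
  pose proof (hnorm_sq (hadd X u v)) as E. unfold nsq in E. revert E. ipexp. intro E.
  pose proof (hnorm_sq u). pose proof (hnorm_sq v). unfold nsq in *.
  pose proof (ip_le_norm' u v). nra.
Qed.

Lemma hnorm_scal a u : hnorm (hscal X a u) = Rabs a * hnorm u.
Proof.
  unfold hnorm. replace (ip (hscal X a u) (hscal X a u)) with (Rsqr a * ip u u)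
    by (ipexp; unfold Rsqr; ring).
  rewrite sqrt_mult by (try apply Rle_0_sqr; apply hinner_pos).
  rewrite sqrt_Rsqr_abs. reflexivity.
Qed.

Lemma hnorm_sym u v : hnorm (hsub u v) = hnorm (hsub v u).
Proof. unfold hnorm. f_equal. ipexp. ring. Qed.

Lemma hnorm_sub_triangle u v w : hnorm (hsub u w) <= hnorm (hsub u v) + hnorm (hsub v w).
Proof.
  replace (hsub u w) with (hadd X (hsub u v) (hsub v w)) by veq.
  apply hnorm_triangle.
Qed.

Lemma closure_incl (S : X -> Prop) y : S y -> closure X S y.
Proof.
  intros Hy eps He. exists y. split; auto.
  replace (hsub y y) with (hzero X) by veq.
  unfold hnorm. rewrite ip_0_l, sqrt_0. lra.
Qed.

Lemma closure_closed (S : X -> Prop) : is_closed X (closure X S).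
Proof.
  intros y Hy eps He.
  destruct (Hy (eps/2)) as [s' [Hs' Hn']]; [lra|].
  destruct (Hs' (eps/2)) as [s [Hs Hn]]; [lra|].
  exists s. split; auto. pose proof (hnorm_sub_triangle y s' s). lra.
Qed.

Lemma closure_convex (S : X -> Prop) : is_convex X S -> is_convex X (closure X S).
Proof.
  intros HS y1 y2 t H1 H2 Ht eps He.
  destruct (H1 eps He) as [s1 [Hs1 Hn1]].
  destruct (H2 eps He) as [s2 [Hs2 Hn2]].
  exists (hadd X (hscal X t s1) (hscal X (1 - t) s2)). split; [apply HS; auto|].
  replace (hsub (hadd X (hscal X t y1) (hscal X (1 - t) y2)) (hadd X (hscal X t s1) (hscal X (1 - t) s2)))
    with (hadd X (hscal X t (hsub y1 s1)) (hscal X (1-t) (hsub y2 s2))) by veq.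
  eapply Rle_lt_trans; [apply hnorm_triangle|].
  rewrite !hnorm_scal, Rabs_right, Rabs_right by lra.
  pose proof (hnorm_nonneg (hsub y1 s1)). pose proof (hnorm_nonneg (hsub y2 s2)). assert (t * hnorm (hsub y1 s1) <= t * eps) by (apply Rmult_le_compat_l; lra). destruct (Req_dec t 0) as [->|Ht0]; [lra|]. assert (t * hnorm (hsub y1 s1) < t * eps) by (apply Rmult_lt_compat_l; lra). assert ((1-t) * hnorm (hsub y2 s2) <= (1-t) * eps) by (apply Rmult_le_compat_l; lra). lra.
Qed.

Lemma proj_char1 (C : X -> Prop) x p : is_convex X C -> is_proj X C x p ->
  forall c, C c -> ip (hsub x p) (hsub c p) <= 0.
Proof.
  intros HC [Hp Hmin] c Hc.
  assert (Ht : forall t, 0 < t <= 1 -> 2 * ip (hsub x p) (hsub c p) <= t * nsq (hsub c p)).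
  { intros t Ht.
    pose proof (Hmin _ (HC c p t Hc Hp ltac:(lra))) as H.
    apply hnorm_le_iff in H. unfold nsq in *. revert H. ipexp. intro H. ipexp. nra. }
  pose proof (nsq_nonneg (hsub c p)).
  set (a := ip (hsub x p) (hsub c p)) in *. set (b := nsq (hsub c p)) in *.
  destruct (Rle_dec a 0) as [|Hn]; auto.
  exfalso. specialize (Ht (a / (2*b + a))).
  assert (0 < a / (2 * b + a) <= 1).
  { split. apply Rdiv_lt_0_compat; lra. apply Rmult_le_reg_r with (2*b+a); [lra|].
    unfold Rdiv. rewrite Rmult_assoc, Rinv_l; lra. }
  specialize (Ht H0).
  assert (a / (2 * b + a) * b * (2*b+a) = a * b) by (field; lra).
  assert (a / (2 * b + a) * b < a).
  { apply Rmult_lt_reg_r with (2*b+a); [lra|]. rewrite H1. nra. }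
  lra.
Qed.

Lemma proj_char2 (C : X -> Prop) x p : C p ->
  (forall c, C c -> ip (hsub x p) (hsub c p) <= 0) -> is_proj X C x p.
Proof.
  intros Hp H. split; auto. intros c Hc. apply hnorm_le_iff.
  specialize (H c Hc). pose proof (nsq_nonneg (hsub p c)).
  unfold nsq in *. revert H H0. ipexp. intros. nra.
Qed.

Lemma proj_unique (C : X -> Prop) x p q : is_convex X C -> is_proj X C x p -> is_proj X C x q -> p = q.
Proof.
  intros HC Hp Hq.
  pose proof (proj_char1 C x p HC Hp q (proj1 Hq)).
  pose proof (proj_char1 C x q HC Hq p (proj1 Hp)).
  apply ext_ip. intro y.
  assert (Hz: hsub p q = hzero X).
  { apply hinner_def. apply Rle_antisym; [|apply hinner_pos]. revert H H0. ipexp. intros. nra. }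
  assert (ip (hsub p q) y = 0) by (rewrite Hz; apply ip_0_l).
  rewrite ip_sub_l in H1. lra.
Qed.

Lemma small_inv eps : 0 < eps -> exists N, forall n, (N <= n)%nat -> / (INR n + 1) < eps.
Proof.
  intro He. destruct (archimed_cor1 eps He) as [N [HN HN0]]. exists N. intros n Hn.
  apply le_INR in Hn. apply lt_INR in HN0. simpl in HN0.
  eapply Rle_lt_trans; [|apply HN]. apply Rinv_le_contravar; lra.
Qed.

Lemma proj_exists (C : X -> Prop) x : (exists c, C c) -> is_closed X C -> is_convex X C ->
  exists p, is_proj X C x p.
Proof.
  intros [c0 Hc0] Hcl Hcv.
  set (E := fun r => exists c, C c /\ r = - nsq (hsub x c)).
  assert (Hb : bound E).
  { exists 0. intros r [c [_ ->]]. pose proof (nsq_nonneg (hsub x c)). lra. }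
  destruct (completeness E Hb (ex_intro _ _ (ex_intro _ c0 (conj Hc0 eq_refl)))) as [m [Hub Hlub]].
  set (d := - m).
  assert (Hd1 : forall c, C c -> d <= nsq (hsub x c)).
  { intros c Hc. assert (E (- nsq (hsub x c))) by (exists c; auto). apply Hub in H. unfold d. lra. }
  assert (Hd0 : 0 <= d).
  { assert (m <= 0). apply Hlub. intros r [c [_ ->]]. pose proof (nsq_nonneg (hsub x c)). lra.
    unfold d. lra. }
  assert (Hd2 : forall eps, 0 < eps -> exists c, C c /\ nsq (hsub x c) < d + eps).
  { intros eps He. apply NNPP. intro Hn.
    assert (m <= m - eps).
    { apply Hlub. intros r [c [Hc ->]]. apply Rnot_lt_le. intro Hlt. apply Hn. exists c.
      split; auto. unfold d. lra. }
    lra. }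
  assert (Hseq : forall n : nat, exists c, C c /\ nsq (hsub x c) < d + / (INR n + 1)).
  { intro n. apply Hd2. apply Rinv_0_lt_compat. pose proof (pos_INR n). lra. }
  set (cs := fun n => proj1_sig (constructive_indefinite_description _ (Hseq n))).
  assert (Hcs : forall n, C (cs n) /\ nsq (hsub x (cs n)) < d + / (INR n + 1)).
  { intro n. unfold cs. destruct (constructive_indefinite_description _ (Hseq n)). auto. }
  assert (Hcau : forall n m, nsq (hsub (cs n) (cs m)) <= 2 * / (INR n + 1) + 2 * / (INR m + 1)).
  { intros n k. destruct (Hcs n) as [Cn Hn]. destruct (Hcs k) as [Ck Hk].
    assert (Hmid := Hd1 _ (Hcv (cs n) (cs k) (1/2) Cn Ck ltac:(lra))).
    unfold nsq in *. revert Hn Hk Hmid. ipexp. intros. nra. }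
  destruct (hcomplete X cs) as [l Hl].
  { intros eps He. destruct (small_inv (eps * eps / 4)) as [N HN]. nra.
    exists N. intros n k Hn Hk. fold (hsub (cs n) (cs k)). fold (hnorm (hsub (cs n) (cs k))).
    apply hnorm_lt_iff; auto. pose proof (Hcau n k). pose proof (HN n Hn). pose proof (HN k Hk). lra. }
  assert (Hlc : C l).
  { apply Hcl. intros eps He. destruct (Hl eps He) as [N HN]. exists (cs N). split; [apply Hcs|].
    rewrite hnorm_sym. apply HN. lia. }
  exists l. apply (proj_char2 C x l Hlc).
  assert (Hxl : nsq (hsub x l) <= d).
  { apply Rnot_lt_le. intro Hlt.
    set (s := hnorm (hsub x l)). set (q := nsq (hsub x l) - d).
    assert (Hs2 : s * s = nsq (hsub x l)) by apply hnorm_sq.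
    assert (Hs0 : 0 <= s) by apply hnorm_nonneg.
    assert (Hq : 0 < q) by (unfold q; lra).
    set (bet := Rmin 1 (q / (4 * (s + 1)))).
    assert (Hbet : 0 < bet).
    { unfold bet. apply Rmin_pos; [lra|]. apply Rdiv_lt_0_compat; lra. }
    assert (Hbet1 : bet <= 1) by apply Rmin_l.
    assert (Hbet2 : bet * (4 * (s + 1)) <= q).
    { assert (bet <= q / (4 * (s+1))) by apply Rmin_r.
      apply Rmult_le_compat_r with (r := 4 * (s+1)) in H; [|lra].
      unfold Rdiv in H. rewrite Rmult_assoc, Rinv_l in H; lra. }
    destruct (Hl bet Hbet) as [N1 HN1].
    destruct (small_inv (q / 2)) as [N2 HN2]; [lra|].
    set (n := max N1 N2).
    specialize (HN1 n ltac:(unfold n; lia)). specialize (HN2 n ltac:(unfold n; lia)).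
    destruct (Hcs n) as [_ Hn].
    pose proof (hnorm_sub_triangle x (cs n) l).
    set (al := hnorm (hsub x (cs n))) in *. set (be := hnorm (hsub (cs n) l)) in *.
    fold (hsub (cs n) l) in HN1. fold (hnorm (hsub (cs n) l)) in HN1. fold be in HN1.
    assert (al * al = nsq (hsub x (cs n))) by apply hnorm_sq.
    assert (0 <= al) by apply hnorm_nonneg. assert (0 <= be) by apply hnorm_nonneg.
    fold s in H.
    destruct (Rle_dec be s).
    - assert ((s - be) * (s - be) <= al * al) by nra.
      assert (s * be <= s * bet) by (apply Rmult_le_compat_l; lra).
      assert (s*s - 2*(s*be) <= al*al) by nra.
      unfold q in *. lra.
    - assert (s * s <= s * bet) by (apply Rmult_le_compat_l; lra).
      unfold q in *. lra. }
  intros c Hc. pose proof (Hd1 c Hc).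
  assert (Hmin : forall c', C c' -> nsq (hsub x l) <= nsq (hsub x c')) by (intros; specialize (Hd1 _ H0); lra).
  apply (proj_char1 C x l Hcv). split; auto. intros c' Hc'. apply hnorm_le_iff. auto. auto.
Qed.

Lemma proj_spec (C : X -> Prop) x : (exists c, C c) -> is_closed X C -> is_convex X C ->
  is_proj X C x (proj X C x).
Proof.
  intros. unfold proj. apply epsilon_spec. apply proj_exists; auto.
Qed.

Lemma proj_in (C : X -> Prop) x : (exists c, C c) -> is_closed X C -> is_convex X C ->
  C (proj X C x).
Proof. intros. apply (proj_spec C x); auto. Qed.

Lemma proj_var (C : X -> Prop) x : (exists c, C c) -> is_closed X C -> is_convex X C ->
  forall c, C c -> ip (hsub x (proj X C x)) (hsub c (proj X C x)) <= 0.
Proof. intros. apply (proj_char1 C); auto. apply proj_spec; auto. Qed.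

Lemma proj_eq (C : X -> Prop) x p : (exists c, C c) -> is_closed X C -> is_convex X C ->
  C p -> (forall c, C c -> ip (hsub x p) (hsub c p) <= 0) -> proj X C x = p.
Proof.
  intros. apply (proj_unique C x); auto. apply proj_spec; auto. apply proj_char2; auto.
Qed.

Lemma proj_firm (C : X -> Prop) u v : (exists c, C c) -> is_closed X C -> is_convex X C ->
  nsq (hsub (proj X C u) (proj X C v)) <= ip (hsub (proj X C u) (proj X C v)) (hsub u v).
Proof.
  intros.
  pose proof (proj_var C u H H0 H1 (proj X C v) (proj_in C v H H0 H1)).
  pose proof (proj_var C v H H0 H1 (proj X C u) (proj_in C u H H0 H1)).
  unfold nsq. revert H2 H3. ipexp. intros. nra.
Qed.

Lemma proj_nonexp (C : X -> Prop) u v : (exists c, C c) -> is_closed X C -> is_convex X C ->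
  nsq (hsub (proj X C u) (proj X C v)) <= nsq (hsub u v).
Proof.
  intros. pose proof (proj_firm C u v H H0 H1).
  pose proof (nsq_nonneg (hsub (hsub (proj X C u) (proj X C v)) (hsub u v))).
  unfold nsq in *. revert H2 H3. ipexp. intros. nra.
Qed.

End H.


Definition incr (phi : nat -> nat) := forall n, (phi n < phi (S n))%nat.

Lemma incr_mono phi : incr phi -> forall n m, (n < m)%nat -> (phi n < phi m)%nat.
Proof.
  intros H n m Hnm. induction Hnm. apply H. specialize (H m). lia.
Qed.

Lemma incr_ge phi : incr phi -> forall n, (n <= phi n)%nat.
Proof. intros H n. induction n. lia. specialize (H n). lia. Qed.

Lemma incr_comp phi psi : incr phi -> incr psi -> incr (fun n => phi (psi n)).
Proof. intros H1 H2 n. apply incr_mono; auto. Qed.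

Fixpoint seq_build (pick : nat -> nat -> nat) (k : nat) : nat :=
  match k with 0 => pick 0%nat 0%nat | S k' => pick (S k') (S (seq_build pick k')) end.

Lemma build_subseq (P : nat -> nat -> Prop) :
  (forall k N, exists n, (N <= n)%nat /\ P k n) ->
  exists phi, incr phi /\ forall k, P k (phi k).
Proof.
  intro H.
  set (pick := fun k N => proj1_sig (constructive_indefinite_description _ (H k N))).
  assert (Hp : forall k N, (N <= pick k N)%nat /\ P k (pick k N)).
  { intros k N. unfold pick. destruct (constructive_indefinite_description _ (H k N)). auto. }
  exists (seq_build pick). split.
  - intro n. simpl. destruct (Hp (S n) (S (seq_build pick n))). lia.
  - intro k. destruct k; simpl; apply Hp.
Qed.

Lemma cv_subseq (a : nat -> R) l phi : Un_cv a l -> incr phi -> Un_cv (fun n => a (phi n)) l.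
Proof.
  intros H Hp eps He. destruct (H eps He) as [N HN]. exists N. intros n Hn.
  apply HN. pose proof (incr_ge phi Hp n). lia.
Qed.

Lemma BW_real (v : nat -> R) M : (forall n, Rabs (v n) <= M) ->
  exists phi, incr phi /\ exists l, Un_cv (fun n => v (phi n)) l.
Proof.
  intro HM.
  destruct (Bolzano_Weierstrass v (fun c => -M <= c <= M) (compact_P3 (-M) M)) as [l Hl].
  { intro n. specialize (HM n). pose proof (Rle_abs (v n)). pose proof (Rle_abs (- v n)). rewrite Rabs_Ropp in *. lra. }
  destruct (build_subseq (fun k n => Rabs (v n - l) < / (INR k + 1))) as [phi [Hphi Hv]].
  { intros k N. destruct (Hl (fun y => Rabs (y - l) < / (INR k + 1)) N) as [p [Hp Hvp]].
    - assert (Hd : 0 < / (INR k + 1)) by (apply Rinv_0_lt_compat; pose proof (pos_INR k); lra).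
      exists (mkposreal _ Hd). intros y Hy. unfold disc in Hy. exact Hy.
    - exists p. split; [lia|exact Hvp]. }
  exists phi. split; auto. exists l. intros eps He.
  destruct (small_inv eps He) as [N HN]. exists N. intros n Hn.
  unfold Rdist. eapply Rlt_trans; [apply Hv|]. apply HN. lia.
Qed.

Lemma BW_real' (v : nat -> R) : exists phi, incr phi /\
  ((exists M, forall n, Rabs (v n) <= M) -> Cauchy_crit (fun n => v (phi n))).
Proof.
  destruct (classic (exists M, forall n, Rabs (v n) <= M)) as [[M HM]|Hn].
  - destruct (BW_real v M HM) as [phi [Hphi [l Hl]]]. exists phi. split; auto.
    intros _. apply CV_Cauchy. exists l. exact Hl.
  - exists (fun n => n). split. intro n; lia. intro H; contradiction.
Qed.

Definition BWf (v : nat -> R) : nat -> nat :=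
  proj1_sig (constructive_indefinite_description _ (BW_real' v)).

Lemma BWf_spec v : incr (BWf v) /\
  ((exists M, forall n, Rabs (v n) <= M) -> Cauchy_crit (fun n => v (BWf v n))).
Proof. unfold BWf. destruct (constructive_indefinite_description _ (BW_real' v)). auto. Qed.

Lemma cauchy_cv (a : nat -> R) : Cauchy_crit a -> exists l, Un_cv a l.
Proof. intro H. destruct (R_complete a H) as [l Hl]. eauto. Qed.

Lemma cv_le_bound (a : nat -> R) l B : Un_cv a l -> (forall n, Rabs (a n) <= B) -> Rabs l <= B.
Proof.
  intros H HB. apply Rnot_lt_le. intro Hlt.
  destruct (H (Rabs l - B)) as [N HN]. lra.
  specialize (HN N (le_n N)). specialize (HB N). unfold Rdist in HN.
  pose proof (Rabs_triang_inv l (a N)). rewrite Rabs_minus_sym in HN. lra.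
Qed.

Lemma cv_ge_bound (a : nat -> R) l c eps : Un_cv a l -> (forall n, eps <= Rabs (a n - c)) -> eps <= Rabs (l - c).
Proof.
  intros H HB. apply Rnot_lt_le. intro Hlt.
  destruct (H (eps - Rabs (l - c))) as [N HN]. lra.
  specialize (HN N (le_n N)). specialize (HB N). unfold Rdist in HN.
  replace (a N - c) with ((a N - l) + (l - c)) in HB by ring.
  pose proof (Rabs_triang (a N - l) (l - c)). lra.
Qed.

Lemma cv_lin (a b : nat -> R) la lb al be :
  Un_cv a la -> Un_cv b lb -> Un_cv (fun n => al * a n + be * b n) (al * la + be * lb).
Proof.
  intros Ha Hb. apply CV_plus; apply CV_mult; auto; intros eps He; exists 0%nat; intros;
  unfold Rdist; rewrite Rminus_diag, Rabs_R0; lra.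
Qed.

Lemma cv_const (c : R) : Un_cv (fun _ => c) c.
Proof. intros eps He. exists 0%nat. intros. unfold Rdist. rewrite Rminus_diag, Rabs_R0. lra. Qed.

Lemma Rabs3 a b c : Rabs (a + b - c) <= Rabs a + Rabs b + Rabs c.
Proof. unfold Rminus. eapply Rle_trans. apply Rabs_triang. rewrite Rabs_Ropp.
  pose proof (Rabs_triang a b). lra. Qed.

Section H.
Variable X : Hilbert.
Notation ip := (hinner X).
Implicit Types u v w x y p q c l : X.

Definition is_lin (C : X -> Prop) := C (hzero X) /\
  forall y z al be, C y -> C z -> C (hadd X (hscal X al y) (hscal X be z)).

Lemma lin_convex C : is_lin C -> is_convex X C.
Proof. intros [_ H] y z t Hy Hz _. apply H; auto. Qed.

Lemma lin_orth (C : X -> Prop) w : is_lin C -> is_closed X C ->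
  forall c, C c -> ip (hsub w (proj X C w)) c = 0.
Proof.
  intros HC Hcl c Hc.
  assert (Hne : exists c, C c) by (exists (hzero X); apply HC).
  set (v := proj X C w).
  assert (Hv : C v) by (apply proj_in; auto; apply lin_convex; auto).
  pose proof (proj_var X C w Hne Hcl (lin_convex C HC) (hadd X (hscal X 1 v) (hscal X 1 c))
    (proj2 HC _ _ _ _ Hv Hc)) as H1.
  pose proof (proj_var X C w Hne Hcl (lin_convex C HC) (hadd X (hscal X 1 v) (hscal X (-1) c))
    (proj2 HC _ _ _ _ Hv Hc)) as H2.
  fold v in H1, H2. revert H1 H2. ipexp. intros. ipexp. nra.
Qed.

Section Diag.
Variable u : nat -> X.
Variable w : nat -> X.
Variable K : R.
Hypothesis HK : forall n, hnorm (u n) <= K.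

Fixpoint Phi (m : nat) : nat -> nat :=
  match m with
  | 0 => fun i => i
  | S m' => fun i => Phi m' (BWf (fun k => ip (u (Phi m' k)) (w m')) i)
  end.

Lemma Phi_incr m : incr (Phi m).
Proof.
  induction m; simpl. intro n; lia.
  apply incr_comp; auto. apply BWf_spec.
Qed.

Lemma Phi_tail m k i : (m <= k)%nat -> exists j, (i <= j)%nat /\ Phi k i = Phi m j.
Proof.
  revert i. induction k; intros i Hmk.
  - assert (m = 0%nat) by lia. subst. exists i. auto.
  - destruct (Nat.eq_dec m (S k)) as [->|Hne]. exists i. auto.
    simpl. set (b := BWf _ i).
    destruct (IHk b ltac:(lia)) as [j [Hj Hj']]. exists j. split; auto.
    pose proof (incr_ge _ (proj1 (BWf_spec (fun k0 => ip (u (Phi k k0)) (w k)))) i).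
    unfold b in *. lia.
Qed.

Definition diag k := Phi k k.

Lemma diag_incr : incr diag.
Proof.
  intro k. unfold diag. simpl.
  pose proof (incr_ge _ (proj1 (BWf_spec (fun k0 => ip (u (Phi k k0)) (w k)))) (S k)).
  apply Nat.lt_le_trans with (Phi k (S k)). apply Phi_incr.
  destruct (Nat.eq_dec (S k) (BWf (fun k0 : nat => ip (u (Phi k k0)) (w k)) (S k))) as [E|E].
  rewrite <- E. lia. apply Nat.lt_le_incl. apply incr_mono. apply Phi_incr. lia.
Qed.

Lemma diag_cauchy m : Cauchy_crit (fun k => ip (u (diag k)) (w m)).
Proof.
  assert (Hc : Cauchy_crit (fun j => ip (u (Phi (S m) j)) (w m))).
  { simpl. apply (BWf_spec (fun k => ip (u (Phi m k)) (w m))).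
    exists (K * hnorm (w m)). intro n. eapply Rle_trans; [apply ip_le_norm|].
    apply Rmult_le_compat_r; auto. apply hnorm_nonneg. }
  intros eps He. destruct (Hc eps He) as [N HN]. exists (max N (S m)). intros n k Hn Hk.
  unfold diag.
  destruct (Phi_tail (S m) n n ltac:(lia)) as [j1 [Hj1 E1]].
  destruct (Phi_tail (S m) k k ltac:(lia)) as [j2 [Hj2 E2]].
  rewrite E1, E2. apply HN; lia.
Qed.
End Diag.

Lemma weak_compact (u : nat -> X) K : (forall n, hnorm (u n) <= K) ->
  exists phi p, incr phi /\ weak_cv X (fun n => u (phi n)) p.
Proof.
  intro HK.
  set (d := diag u u).
  assert (Hd : incr d) by apply diag_incr.
  assert (HK0 : 0 <= K) by (eapply Rle_trans; [apply hnorm_nonneg|apply (HK 0%nat)]).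
  set (V := fun y => Cauchy_crit (fun k => ip (u (d k)) y)).
  assert (HVlin : is_lin V).
  { split.
    - unfold V. apply CV_Cauchy. exists 0. eapply Un_cv_ext; [|apply (cv_const 0)].
      intro n. simpl. rewrite ip_0_r. reflexivity.
    - intros y z al be Hy Hz. unfold V in *. apply cauchy_cv in Hy as [ly Hy].
      apply cauchy_cv in Hz as [lz Hz]. apply CV_Cauchy. exists (al * ly + be * lz).
      eapply Un_cv_ext; [|apply (cv_lin _ _ _ _ al be Hy Hz)]. intro n. simpl. ipexp. ring. }
  assert (HVcl : is_closed X V).
  { intros y Hy eps He.
    destruct (Hy (eps / (3 * (K + 1)))) as [s [Hs Hns]].
    { apply Rdiv_lt_0_compat; lra. }
    destruct (Hs (eps / 3)) as [N HN]. lra.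
    exists N. intros n m Hn Hm. specialize (HN n m Hn Hm). unfold Rdist in *.
    assert (Hb : forall k, Rabs (ip (u k) y - ip (u k) s) <= K * (eps / (3 * (K + 1)))).
    { intro k. rewrite <- ip_sub_r. eapply Rle_trans; [apply ip_le_norm|].
      apply Rmult_le_compat; auto; try apply hnorm_nonneg. lra. }
    assert (K * (eps / (3 * (K + 1))) <= eps / 3).
    { unfold Rdiv. rewrite <- Rmult_assoc. apply Rmult_le_reg_r with (3 * (K + 1)). lra.
      rewrite !Rmult_assoc, Rinv_l by lra. nra. }
    pose proof (Hb (d n)). pose proof (Hb (d m)).
    replace (ip (u (d n)) y - ip (u (d m)) y) with
      ((ip (u (d n)) y - ip (u (d n)) s) + (ip (u (d n)) s - ip (u (d m)) s)
        - (ip (u (d m)) y - ip (u (d m)) s)) by ring.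
    pose proof (Rabs3 (ip (u (d n)) y - ip (u (d n)) s) (ip (u (d n)) s - ip (u (d m)) s)
      (ip (u (d m)) y - ip (u (d m)) s)). lra. }
  assert (HVall : forall y, V y).
  { intro y. set (v := proj X V y).
    assert (Hne : exists c, V c) by (exists (hzero X); apply HVlin).
    assert (Hv : V v) by (apply proj_in; auto; apply lin_convex; auto).
    assert (Hort : forall c, V c -> ip (hsub y v) c = 0) by (apply lin_orth; auto).
    assert (Hum : forall m, V (u m)).
    { intro m. apply (diag_cauchy u u K HK m). }
    assert (Hyv : V (hsub y v)).
    { unfold V. apply CV_Cauchy. exists 0. eapply Un_cv_ext; [|apply (cv_const 0)].
      intro n. simpl. rewrite hinner_sym. symmetry. apply Hort. apply Hum. }
    assert (hsub y v = hzero X) by (apply hinner_def; apply Hort; auto).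
    replace y with v; auto. apply ext_ip. intro z.
    assert (ip (hsub y v) z = 0) by (rewrite H; apply ip_0_l).
    rewrite ip_sub_l in H0. lra. }
  set (L := fun y => proj1_sig (R_complete _ (HVall y))).
  assert (HL : forall y, Un_cv (fun k => ip (u (d k)) y) (L y)).
  { intro y. unfold L. destruct (R_complete _ (HVall y)). auto. }
  assert (HLlin : forall y z al be, L (hadd X (hscal X al y) (hscal X be z)) = al * L y + be * L z).
  { intros. eapply UL_sequence. apply HL.
    eapply Un_cv_ext; [|apply (cv_lin _ _ _ _ al be (HL y) (HL z))]. intro n. simpl. ipexp. ring. }
  assert (HL0 : L (hzero X) = 0).
  { eapply UL_sequence. apply HL. eapply Un_cv_ext; [|apply (cv_const 0)].
    intro n. simpl. rewrite ip_0_r. reflexivity. }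
  assert (HLsub : forall y z, L (hsub y z) = L y - L z).
  { intros. replace (hsub y z) with (hadd X (hscal X 1 y) (hscal X (-1) z)) by veq.
    rewrite HLlin. ring. }
  assert (HLb : forall y, Rabs (L y) <= K * hnorm y).
  { intro y. apply (cv_le_bound _ _ _ (HL y)). intro n. eapply Rle_trans; [apply ip_le_norm|].
    apply Rmult_le_compat_r; auto. apply hnorm_nonneg. }
  assert (Hriesz : exists p, forall y, L y = ip p y).
  { destruct (classic (exists w0, L w0 <> 0)) as [[w0 Hw0]|Hall].
    2:{ exists (hzero X). intro y. rewrite ip_0_l. apply NNPP. intro Hy. apply Hall. eauto. }
    set (Kr := fun y => L y = 0).
    assert (HKlin : is_lin Kr).
    { split. apply HL0. intros y z al be Hy Hz. unfold Kr in *. rewrite HLlin, Hy, Hz. ring. }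
    assert (HKcl : is_closed X Kr).
    { intros y Hy. unfold Kr. apply NNPP. intro Hne.
      assert (Hlt : 0 < Rabs (L y)) by (apply Rabs_pos_lt; auto). exfalso.
      destruct (Hy (Rabs (L y) / (K + 1))) as [s [Hs Hns]]. apply Rdiv_lt_0_compat; lra.
      pose proof (HLb (hsub y s)). rewrite HLsub, Hs, Rminus_0_r in H.
      assert (K * hnorm (hsub y s) <= K * (Rabs (L y) / (K + 1)))
        by (apply Rmult_le_compat_l; lra).
      assert (K * (Rabs (L y) / (K + 1)) < Rabs (L y)).
      { apply Rmult_lt_reg_r with (K + 1). lra. unfold Rdiv.
        rewrite Rmult_assoc, (Rmult_assoc (Rabs (L y))), Rinv_l by lra. nra. }
      lra. }
    set (h := hsub w0 (proj X Kr w0)).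
    assert (Hhort : forall c, Kr c -> ip h c = 0) by (apply lin_orth; auto).
    assert (HLh : L h = L w0).
    { unfold h. rewrite HLsub.
      assert (Kr (proj X Kr w0)). apply proj_in; auto. exists (hzero X). apply HKlin.
      apply lin_convex; auto. rewrite H. ring. }
    assert (Hh0 : ip h h <> 0).
    { intro Hz. apply hinner_def in Hz. rewrite Hz, HL0 in HLh. auto. }
    exists (hscal X (L h / ip h h) h). intro y.
    assert (Kr (hsub y (hscal X (L y / L h) h))).
    { unfold Kr. rewrite HLsub. replace (hscal X (L y / L h) h) with
        (hadd X (hscal X (L y / L h) h) (hscal X 0 h)) by veq.
      rewrite HLlin. field. rewrite HLh. auto. }
    apply Hhort in H. revert H. ipexp. intro H.
    assert (L h <> 0) by (rewrite HLh; auto).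
    replace (ip h y) with (L y / L h * ip h h) by lra. field. auto. }
  destruct Hriesz as [p Hp]. exists d, p. split; auto.
  intro y. rewrite <- Hp. apply HL.
Qed.
End H.


Lemma cv_le0 (a : nat -> R) l : Un_cv a l -> (forall n, a n <= 0) -> l <= 0.
Proof.
  intros H Hn. apply Rnot_lt_le. intro Hl. destruct (H l Hl) as [N HN].
  specialize (HN N (le_n N)). specialize (Hn N). unfold Rdist in HN.
  rewrite Rabs_left1 in HN by lra. lra.
Qed.

Lemma cv_shift (a : nat -> R) l : Un_cv (fun n => a (S n)) l -> Un_cv a l.
Proof.
  intros H eps He. destruct (H eps He) as [N HN]. exists (S N). intros n Hn.
  destruct n. lia. apply HN. lia.
Qed.

Lemma cv_shift' (a : nat -> R) l : Un_cv a l -> Un_cv (fun n => a (S n)) l.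
Proof.
  intros H eps He. destruct (H eps He) as [N HN]. exists N. intros n Hn. apply HN. lia.
Qed.

Lemma t_le0 a : (forall t, t * a <= 0) -> a = 0.
Proof. intro H. pose proof (H 1). pose proof (H (-1)). lra. Qed.

Lemma decr_cv (s : nat -> R) : (forall n, s (S n) <= s n) -> (forall n, 0 <= s n) ->
  exists l, Un_cv s l.
Proof.
  intros H1 H2. destruct (decreasing_cv s H1) as [l Hl]; eauto.
  exists 0. intros r [i ->]. unfold opp_seq. specialize (H2 i). lra.
Qed.

Section H.
Variable X : Hilbert.
Notation ip := (hinner X).
Implicit Types u v w x y p q c : X.

Lemma opial (u : nat -> X) K (S : X -> Prop) : (forall n, hnorm (u n) <= K) ->
  (forall phi p, incr phi -> weak_cv X (fun n => u (phi n)) p -> S p) ->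
  (forall p q, S p -> S q -> exists l, Un_cv (fun n => ip (u n) (hsub p q)) l) ->
  exists p, S p /\ weak_cv X u p.
Proof.
  intros HK H1 H2.
  destruct (weak_compact X u K HK) as [phi [p [Hphi Hw]]].
  assert (Sp : S p) by (eapply H1; eauto).
  exists p. split; auto. intro y. apply NNPP. intro Hn.
  assert (Hex : exists eps, eps > 0 /\ forall N, exists n, (N <= n)%nat /\ eps <= Rabs (ip (u n) y - ip p y)).
  { apply NNPP. intro H'. apply Hn. intros eps He. apply NNPP. intro H3. apply H'.
    exists eps. split; auto. intro N. apply NNPP. intro H4. apply H3. exists N.
    intros n Hn'. apply Rnot_le_lt. intro. apply H4. exists n. split; auto. }
  destruct Hex as [eps [He Hex]].
  destruct (build_subseq (fun _ n => eps <= Rabs (ip (u n) y - ip p y))) as [psi [Hpsi Hpsi']].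
  { intros _ N. apply Hex. }
  destruct (weak_compact X (fun n => u (psi n)) K (fun n => HK (psi n))) as [chi [q [Hchi Hw2]]].
  assert (Sq : S q) by (apply (H1 (fun n => psi (chi n))); auto; apply incr_comp; auto).
  assert (Hpq : eps <= Rabs (ip q y - ip p y)).
  { apply (cv_ge_bound (fun n => ip (u (psi (chi n))) y)); auto. }
  destruct (H2 p q Sp Sq) as [l Hl].
  assert (E1 : l = ip p (hsub p q)).
  { eapply UL_sequence. apply (cv_subseq _ _ _ Hl Hphi). apply Hw. }
  assert (E2 : l = ip q (hsub p q)).
  { eapply UL_sequence. apply (cv_subseq _ _ _ Hl (incr_comp _ _ Hpsi Hchi)). apply Hw2. }
  assert (hsub p q = hzero X).
  { apply hinner_def. rewrite ip_sub_l. lra. }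
  assert (ip (hsub q p) y = 0).
  { replace (hsub q p) with (hscal X (-1) (hsub p q)) by veq. rewrite H, hinner_scal_l, ip_0_l. ring. }
  rewrite ip_sub_l in H0. replace (ip q y - ip p y) with 0 in Hpq by lra. rewrite Rabs_R0 in Hpq. lra.
Qed.

Lemma weak_closed (C : X -> Prop) (v : nat -> X) p : (exists c, C c) -> is_closed X C -> is_convex X C ->
  (forall n, C (v n)) -> weak_cv X v p -> C p.
Proof.
  intros Hne Hcl Hcv Hv Hw.
  set (q := proj X C p).
  assert (Hle : forall n, ip (hsub p q) (hsub (v n) q) <= 0) by (intro; apply proj_var; auto).
  assert (Hcvg : Un_cv (fun n => ip (hsub p q) (hsub (v n) q)) (ip (hsub p q) (hsub p q))).
  { replace (ip (hsub p q) (hsub p q)) with (ip p (hsub p q) - ip q (hsub p q)) by (rewrite ip_sub_l; ring).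
    eapply Un_cv_ext; [|apply (CV_minus _ _ _ _ (Hw (hsub p q)) (cv_const (ip q (hsub p q))))].
    intro n. simpl. ipexp. ring. }
  pose proof (cv_le0 _ _ Hcvg Hle).
  assert (hsub p q = hzero X) by (apply hinner_def; pose proof (hinner_pos X (hsub p q)); lra).
  replace p with q. apply proj_in; auto.
  apply ext_ip. intro y. assert (ip (hsub p q) y = 0) by (rewrite H0; apply ip_0_l).
  rewrite ip_sub_l in H1. lra.
Qed.

Lemma strong_weak0 (w : nat -> X) : Un_cv (fun n => nsq X (w n)) 0 ->
  forall y, Un_cv (fun n => ip (w n) y) 0.
Proof.
  intros H y eps He.
  destruct (H ((eps / (hnorm y + 1)) * (eps / (hnorm y + 1)))) as [N HN].
  { pose proof (hnorm_nonneg X y). assert (0 < eps / (hnorm y + 1)) by (apply Rdiv_lt_0_compat; lra). nra. }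
  exists N. intros n Hn. specialize (HN n Hn). unfold Rdist in *. rewrite Rminus_0_r in *.
  pose proof (hnorm_nonneg X y).
  assert (0 < eps / (hnorm y + 1)) by (apply Rdiv_lt_0_compat; lra).
  rewrite Rabs_right in HN by (apply Rle_ge; apply nsq_nonneg).
  apply hnorm_lt_iff in HN; auto.
  eapply Rle_lt_trans; [apply ip_le_norm|].
  pose proof (hnorm_nonneg X (w n)).
  assert (hnorm (w n) * hnorm y <= eps / (hnorm y + 1) * hnorm y) by (apply Rmult_le_compat_r; lra).
  assert (eps / (hnorm y + 1) * hnorm y < eps).
  { assert (E : eps / (hnorm y + 1) * hnorm y = eps - eps / (hnorm y + 1)) by (field; lra).
    rewrite E. lra. }
  lra.
Qed.

Lemma aff_line (B : X -> Prop) p b b' t : is_affine X B -> B p -> B b -> B b' ->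
  B (hadd X p (hscal X t (hsub b b'))).
Proof.
  intros [_ HB] Hp Hb Hb'.
  assert (Hm : B (hadd X (hscal X (1/2) p) (hscal X (1 - 1/2) b))) by (apply HB; auto).
  assert (Hu : B (hadd X (hscal X 2 (hadd X (hscal X (1/2) p) (hscal X (1 - 1/2) b))) (hscal X (1 - 2) b')))
    by (apply HB; auto).
  replace (hadd X (hscal X 2 (hadd X (hscal X (1/2) p) (hscal X (1 - 1/2) b))) (hscal X (1 - 2) b'))
    with (hadd X p (hsub b b')) in Hu by (apply ext_ip; intro; autorewrite with hin; field).
  pose proof (HB _ _ t Hu Hp).
  replace (hadd X p (hscal X t (hsub b b'))) with
    (hadd X (hscal X t (hadd X p (hsub b b'))) (hscal X (1 - t) p)) by veq. auto.
Qed.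

Lemma aff_convex (B : X -> Prop) : is_affine X B -> is_convex X B.
Proof. intros [_ HB] y z t Hy Hz _. apply HB; auto. Qed.

Lemma aff_orth (B : X -> Prop) y b b' : is_affine X B -> is_closed X B -> B b -> B b' ->
  ip (hsub y (proj X B y)) (hsub b b') = 0.
Proof.
  intros Ha Hc Hb Hb'.
  assert (Hne : exists c, B c) by eauto.
  set (p := proj X B y).
  assert (Hp : B p) by (apply proj_in; auto; apply aff_convex; auto).
  apply t_le0. intro t.
  pose proof (proj_var X B y Hne Hc (aff_convex B Ha) _ (aff_line B p b b' t Ha Hp Hb Hb')).
  fold p in H. revert H. ipexp. intro. ipexp. lra.
Qed.

Lemma aff_proj_eq (B : X -> Prop) y p : is_affine X B -> is_closed X B -> B p ->
  (forall b b', B b -> B b' -> ip (hsub y p) (hsub b b') = 0) -> proj X B y = p.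
Proof.
  intros Ha Hc Hp H. apply proj_eq; auto. eauto. apply aff_convex; auto.
  intros c Hcc. rewrite H; auto. lra.
Qed.

End H.


Section DR.
Variable X : Hilbert.
Notation ip := (hinner X).
Notation nsq := (nsq X).
Variables A B : X -> Prop.
Hypothesis hAne : exists a, A a.
Hypothesis hAcl : is_closed X A.
Hypothesis hAcv : is_convex X A.
Hypothesis hBcl : is_closed X B.
Hypothesis hBaff : is_affine X B.
Variable g : X.
Hypothesis hgD : set_diff X B A g.
Hypothesis hgmin : forall z, set_diff X B A z -> nsq g <= nsq z.
Variable x0 : X.

Lemma hBne : exists b, B b.
Proof. apply hBaff. Qed.
Lemma hBcv : is_convex X B.
Proof. apply aff_convex; auto. Qed.

Lemma D_convex : is_convex X (set_diff X B A).
Proof.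
  intros z1 z2 t [a1 [b1 [Ha1 [Hb1 ->]]]] [a2 [b2 [Ha2 [Hb2 ->]]]] Ht.
  exists (hadd X (hscal X t a1) (hscal X (1 - t) a2)), (hadd X (hscal X t b1) (hscal X (1 - t) b2)).
  split; [apply hAcv; auto|]. split; [apply hBcv; auto|]. veq.
Qed.

Lemma G1 a b : A a -> B b -> 0 <= ip g (hsub (hsub b a) g).
Proof.
  intros Ha Hb.
  assert (Hp : is_proj X (set_diff X B A) (hzero X) g).
  { split; auto. intros c Hc. apply hnorm_le_iff. specialize (hgmin c Hc).
    unfold nsq in *. revert hgmin. ipexp. lra. }
  pose proof (proj_char1 X _ _ _ D_convex Hp (hsub b a) ltac:(exists a, b; auto)).
  revert H. ipexp. lra.
Qed.

Lemma G2 b b' : B b -> B b' -> ip g (hsub b b') = 0.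
Proof.
  intros Hb Hb'. destruct hgD as [as_ [bs [Has [Hbs Hg]]]].
  apply t_le0. intro t.
  pose proof (G1 as_ _ Has (aff_line X B bs b b' (-t) hBaff Hbs Hb Hb')).
  revert H. rewrite Hg. ipexp. intro. nra.
Qed.

Definition isE e := A e /\ B (hadd X e g).

Lemma E_ne : exists e, isE e.
Proof.
  destruct hgD as [as_ [bs [Has [Hbs Hg]]]]. exists as_. split; auto.
  replace (hadd X as_ g) with bs; auto. rewrite Hg. veq.
Qed.

Lemma G3 e a : isE e -> A a -> ip g (hsub a e) <= 0.
Proof.
  intros [He1 He2] Ha. pose proof (G1 a _ Ha He2). revert H. ipexp. lra.
Qed.

Lemma PA_shift e t : isE e -> 0 <= t -> proj X A (hadd X e (hscal X t g)) = e.
Proof.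
  intros He Ht. apply proj_eq; auto. apply He.
  intros c Hc. pose proof (G3 e c He Hc). revert H. ipexp. intro. nra.
Qed.

Lemma PB_shift e t : isE e -> proj X B (hsub e (hscal X t g)) = hadd X e g.
Proof.
  intros He. apply aff_proj_eq; auto. apply He.
  intros b b' Hb Hb'. pose proof (G2 b b' Hb Hb'). rewrite ip_sub_r in H.
  assert (Hz : ip g b = ip g b') by lra. ipexp. rewrite Hz. ring.
Qed.

Notation T := (DR X A B).

Lemma T_shift e n : isE e -> T (hadd X e (hscal X (INR n) g)) = hadd X e (hscal X (INR (S n)) g).
Proof.
  intro He. unfold DR, refl. rewrite PA_shift; auto; [|apply pos_INR].
  replace (hsub (hscal X 2 e) (hadd X e (hscal X (INR n) g))) with (hsub e (hscal X (INR n) g)) by veq.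
  rewrite PB_shift; auto. rewrite S_INR. veq.
Qed.

Lemma refl_nonexp (C : X -> Prop) u v : (exists c, C c) -> is_closed X C -> is_convex X C ->
  nsq (hsub (refl X C u) (refl X C v)) <= nsq (hsub u v).
Proof.
  intros. pose proof (proj_firm X C u v H H0 H1). unfold refl.
  set (p := proj X C u) in *. set (q := proj X C v) in *.
  unfold nsq in *. revert H2. ipexp. intro. nra.
Qed.

Lemma T_firm u v : nsq (hsub (T u) (T v)) + nsq (hsub (hsub u (T u)) (hsub v (T v))) <= nsq (hsub u v).
Proof.
  pose proof (refl_nonexp A u v hAne hAcl hAcv) as H2.
  pose proof (refl_nonexp B (refl X A u) (refl X A v) hBne hBcl hBcv) as H1.
  unfold DR. unfold refl in *.
  set (pa := proj X A u) in *. set (pa' := proj X A v) in *.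
  set (pb := proj X B (hsub (hscal X 2 pa) u)) in *.
  set (pb' := proj X B (hsub (hscal X 2 pa') v)) in *.
  unfold nsq in *. revert H1 H2. ipexp. intros. lra.
Qed.

Definition xs n := Nat.iter n T x0.
Definition zs n := hsub (xs n) (hscal X (INR n) g).
Definition as_ n := proj X A (xs n).
Definition bs n := proj X B (refl X A (xs n)).

Lemma xs_S n : xs (S n) = hadd X (hsub (xs n) (as_ n)) (bs n).
Proof. reflexivity. Qed.

Lemma fejer e n : isE e -> nsq (hsub (zs (S n)) e) + nsq (hsub (zs n) (zs (S n))) <= nsq (hsub (zs n) e).
Proof.
  intro He. pose proof (T_firm (xs n) (hadd X e (hscal X (INR n) g))) as H.
  rewrite T_shift in H; auto.
  change (T (xs n)) with (xs (S n)) in H.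
  replace (hsub (xs (S n)) (hadd X e (hscal X (INR (S n)) g))) with (hsub (zs (S n)) e) in H
    by (unfold zs; veq).
  replace (hsub (hsub (xs n) (xs (S n))) (hsub (hadd X e (hscal X (INR n) g)) (hadd X e (hscal X (INR (S n)) g))))
    with (hsub (zs n) (zs (S n))) in H by (unfold zs; veq).
  replace (hsub (xs n) (hadd X e (hscal X (INR n) g))) with (hsub (zs n) e) in H by (unfold zs; veq).
  exact H.
Qed.

Lemma fejer_dec e n : isE e -> nsq (hsub (zs (S n)) e) <= nsq (hsub (zs n) e).
Proof. intro He. pose proof (fejer e n He). pose proof (nsq_nonneg X (hsub (zs n) (zs (S n)))). lra. Qed.

Lemma fejer_bound e n : isE e -> nsq (hsub (zs n) e) <= nsq (hsub (zs 0) e).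
Proof.
  intro He. induction n. lra. pose proof (fejer_dec e n He). lra.
Qed.

Lemma fejer_cv e : isE e -> exists l, Un_cv (fun n => nsq (hsub (zs n) e)) l.
Proof.
  intro He. apply decr_cv. intro n. apply fejer_dec; auto. intro. apply nsq_nonneg.
Qed.

Definition wgap n := hsub (hsub (bs n) (as_ n)) g.

Lemma wgap_eq n : nsq (wgap n) = nsq (hsub (zs n) (zs (S n))).
Proof.
  unfold wgap, zs. rewrite xs_S, S_INR. unfold nsq. ipexp. ring.
Qed.

Lemma wgap_cv : Un_cv (fun n => nsq (wgap n)) 0.
Proof.
  destruct E_ne as [e He]. destruct (fejer_cv e He) as [l Hl].
  intros eps Heps. destruct (Hl (eps/2)) as [N HN]. lra.
  exists N. intros n Hn. unfold Rdist. rewrite Rminus_0_r, Rabs_right by (apply Rle_ge, nsq_nonneg).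
  rewrite wgap_eq. pose proof (fejer e n He).
  pose proof (HN n Hn). pose proof (HN (S n) ltac:(lia)). unfold Rdist in *.
  apply Rabs_def2 in H0. apply Rabs_def2 in H1. lra.
Qed.

Lemma as_bounded e : isE e -> forall n, hnorm (as_ n) <= hnorm (hsub (zs 0) e) + hnorm e.
Proof.
  intros He n.
  assert (H1 : nsq (hsub (as_ n) e) <= nsq (hsub (zs n) e)).
  { unfold as_.
    replace (hsub (proj X A (xs n)) e) with (hsub (proj X A (xs n)) (proj X A (hadd X e (hscal X (INR n) g))))
      by (rewrite PA_shift; auto; apply pos_INR).
    eapply Rle_trans. apply proj_nonexp; auto.
    right. unfold zs, nsq. f_equal; veq. }
  pose proof (fejer_bound e n He).
  assert (hnorm (hsub (as_ n) e) <= hnorm (hsub (zs 0) e)) by (apply hnorm_le_iff; lra).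
  replace (as_ n) with (hadd X (hsub (as_ n) e) e) at 1 by veq.
  pose proof (hnorm_triangle X (hsub (as_ n) e) e). lra.
Qed.

Lemma H1_clust phi p : incr phi -> weak_cv X (fun n => as_ (phi n)) p -> isE p.
Proof.
  intros Hphi Hw. split.
  - apply (weak_closed X A (fun n => as_ (phi n))); auto. intro n. unfold as_, bs. apply proj_in; auto.
  - apply (weak_closed X B (fun n => bs (phi n))); auto. apply hBne. apply hBcv.
    intro n. unfold as_, bs. apply proj_in; auto. apply hBne. apply hBcv.
    intro y.
    assert (Hw0 := cv_subseq _ _ _ (strong_weak0 X wgap wgap_cv y) Hphi).
    replace (ip (hadd X p g) y) with (ip p y + ip g y + 0) by (ipexp; ring).
    eapply Un_cv_ext; [|apply (CV_plus _ _ _ _ (CV_plus _ _ _ _ (Hw y) (cv_const (ip g y))) Hw0)].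
    intro n. simpl. unfold wgap. ipexp. ring.
Qed.

Lemma H2_clust p q : isE p -> isE q -> exists l, Un_cv (fun n => ip (as_ n) (hsub p q)) l.
Proof.
  intros Hp Hq.
  assert (Hpq : hsub p q = hsub (hadd X p g) (hadd X q g)) by veq.
  assert (Hg0 : ip g (hsub p q) = 0) by (rewrite Hpq; apply G2; [apply Hp|apply Hq]).
  assert (Hr0 : forall n, ip (hsub (refl X A (xs n)) (bs n)) (hsub p q) = 0).
  { intro n. rewrite Hpq. unfold bs. apply aff_orth; auto. apply Hp. apply Hq. }
  assert (Heq : forall n, ip (as_ n) (hsub p q) = ip (zs (S n)) (hsub p q)).
  { intro n.
    replace (as_ n) with (hadd X (zs (S n)) (hadd X (hsub (refl X A (xs n)) (bs n)) (hscal X (INR (S n)) g)))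
      by (unfold zs; rewrite xs_S; unfold refl, as_; veq).
    rewrite hinner_add_l, hinner_add_l, Hr0, hinner_scal_l, Hg0. ring. }
  destruct (fejer_cv p Hp) as [lp Hlp]. destruct (fejer_cv q Hq) as [lq Hlq].
  exists ((lq - lp - nsq q + nsq p) / 2).
  eapply Un_cv_ext. intro n. symmetry. apply Heq.
  apply (cv_shift' (fun m => ip (zs m) (hsub p q))).
  replace ((lq - lp - nsq q + nsq p) / 2) with ((1/2) * (lq - lp) + (-1/2) * (nsq q - nsq p)) by field.
  eapply Un_cv_ext; [|apply (cv_lin _ _ _ _ (1/2) (-1/2) (CV_minus _ _ _ _ Hlq Hlp)
     (cv_const (nsq q - nsq p)))].
  intro n. simpl. unfold nsq. ipexp. field.
Qed.

Lemma main_i : exists e, isE e /\ weak_cv X as_ e.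
Proof.
  destruct E_ne as [e He].
  apply (opial X as_ (hnorm (hsub (zs 0) e) + hnorm e) isE (as_bounded e He) H1_clust H2_clust).
Qed.

Lemma main_ii e : isE e -> weak_cv X as_ e ->
  weak_cv X (fun n => proj X B (xs n)) (hadd X e g).
Proof.
  intros He Hw y. apply cv_shift.
  set (pw := fun n => proj X B (hadd X (as_ n) g)).
  assert (Hpw : forall n, proj X B (xs (S n)) = pw n).
  { intro n. apply aff_proj_eq; auto. apply proj_in; auto. apply hBne. apply hBcv.
    intros b b' Hb Hb'.
    replace (hsub (xs (S n)) (pw n)) with
      (hsub (hsub (hsub (hadd X (as_ n) g) (pw n)) (hsub (refl X A (xs n)) (bs n))) g)
      by (rewrite xs_S; unfold refl, as_; veq).
    pose proof (aff_orth X B (hadd X (as_ n) g) b b' hBaff hBcl Hb Hb') as O1. pose proof (aff_orth X B (refl X A (xs n)) b b' hBaff hBcl Hb Hb') as O2. pose proof (G2 b b' Hb Hb') as O3. fold (pw n) in O1. fold (bs n) in O2. rewrite !ip_sub_l in *. lra. }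
  assert (Hsm : Un_cv (fun n => nsq (hsub (pw n) (hadd X (as_ n) g))) 0).
  { intros eps Heps. destruct (wgap_cv eps Heps) as [N HN]. exists N. intros n Hn.
    specialize (HN n Hn). unfold Rdist in *. rewrite Rminus_0_r in *.
    rewrite Rabs_right in * by (apply Rle_ge, nsq_nonneg).
    eapply Rle_lt_trans; [|apply HN].
    assert (Hpr := proj_spec X B (hadd X (as_ n) g) hBne hBcl hBcv).
    destruct Hpr as [_ Hmin]. specialize (Hmin (bs n) ltac:(unfold bs; apply proj_in; auto; [apply hBne|apply hBcv])).
    apply hnorm_le_iff in Hmin. fold (pw n) in Hmin. unfold wgap.
    unfold nsq in *. revert Hmin. ipexp. lra. }
  pose proof (strong_weak0 X _ Hsm y) as Hw0.
  replace (ip (hadd X e g) y) with (ip e y + ip g y + 0) by (ipexp; ring).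
  eapply Un_cv_ext; [|apply (CV_plus _ _ _ _ (CV_plus _ _ _ _ (Hw y) (cv_const (ip g y))) Hw0)].
  intro n. simpl. change (Nat.iter (S n) (DR X A B) x0) with (xs (S n)). change (T (xs n)) with (xs (S n)). rewrite Hpw. ipexp. ring.
Qed.

End DR.


Theorem theorem2p5 (X : Hilbert) (A B : X -> Prop)
  (hAne : exists a, A a) (hAcl : is_closed X A) (hAcv : is_convex X A)
  (hBcl : is_closed X B) (hBaff : is_affine X B)
  (hg : set_diff X B A (proj X (closure X (set_diff X B A)) (hzero X)))
  (x : X) :
  let g := proj X (closure X (set_diff X B A)) (hzero X) in
  let T := DR X A B in
  (exists e, (A e /\ B (hadd X e g)) /\
     weak_cv X (fun n => proj X A (Nat.iter n T x)) e) /\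
  (exists f, (B f /\ A (hsub f g)) /\
     weak_cv X (fun n => proj X B (Nat.iter n T x)) f).
Proof.
  intros g T.
  assert (Hproj : is_proj X (closure X (set_diff X B A)) (hzero X) g).
  { apply proj_spec. exists g. apply closure_incl. exact hg.
    apply closure_closed. apply closure_convex. apply D_convex; auto. }
  assert (hgmin : forall z, set_diff X B A z -> nsq X g <= nsq X z).
  { intros z Hz. destruct Hproj as [_ Hmin]. specialize (Hmin z (closure_incl X _ z Hz)).
    apply hnorm_le_iff in Hmin. unfold nsq in *. revert Hmin. ipexp. lra. }
  destruct (main_i X A B hAne hAcl hAcv hBcl hBaff g hg hgmin x) as [e [He Hw]].
  split.
  - exists e. split; [exact He|]. exact Hw.
  - exists (hadd X e g). split.
    + split. apply He. replace (hsub (hadd X e g) g) with e by veq. apply He.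
    + exact (main_ii X A B hAne hAcl hAcv hBcl hBaff g hg hgmin x e He Hw).
Qed.
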